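(* Let $\mathcal{R}$ be a left-connected rewriting system over a signature $\Sigma$, let $L_1\xleftarrow{[i_1,o_1]}K_1\to R_1$ and $L_2\xleftarrow{[i_2,o_2]}K_2\to R_2$ be rules of $\mathcal{R}$, and let $(g_1,g_2\colon G\to L_1+L_2)$ be a gluing scheme yielding a pre-critical pair, with gluing $\epsilon\colon L_1+L_2\twoheadrightarrow S=\mathtt{coeq}(g_1,g_2)$ and interface $in(S)+out(S)\xrightarrow{[\subseteq,\subseteq]}S$. This pre-critical pair is parallel if and only if both of the following hold: (1) no hyperedge of $L_1$ is glued to a hyperedge of $L_2$; and (2) whenever a node $v_1$ of $L_1$ and a node $v_2$ of $L_2$ are glued, $v_1$ lies in the interface of $L_1$ (the image of $[i_1,o_1]$, i.e. $in(L_1)\cup out(L_1)$) and $v_2$ lies in the interface of $L_2$ (the image of $[i_2,o_2]$).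
   Context: A signature $\Sigma$ is a set of triples $(x,n,m)$ (label, arity, coarity). A $\Sigma$-hypergraph $G=(V,E,s,t,l)$ has finite sets $V$ (nodes), $E$ (hyperedges), maps $s,t\colon E\to V^*$ (lists of sources/targets) and a labelling $l\colon E\to\Sigma$ sending a hyperedge with $n$ sources and $m$ targets to some $(x,n,m)$. Morphisms preserve sources, targets and labels; they form the category $\mathbf{Hyp}_\Sigma$, where colimits are computed componentwise and monos/epis are injective/surjective on nodes and hyperedges. Composition is written $f;g$; $\iota_1,\iota_2$ are coprojections. A hypergraph is discrete if it has no hyperedges. A path is a list of hyperedges $[e_1,\dots,e_n]$ with some target of $e_k$ equal to a source of $e_{k+1}$ for each $k$; it goes from $v$ to $v'$ if $v$ is a source of $e_1$ and $v'$ a target of $e_n$; a cycle is a path with some source of $e_1$ a target of $e_n$. In-degree (out-degree) of a node $v$: number of pairs $(e,i)$ with $v$ the $i$-th target (source) of $e$; $in(H)$, $out(H)$: nodes of in-degree $0$, out-degree $0$. $H$ is ma (monogamous acyclic) if it has no cycle and all in- and out-degrees are $\le 1$. A cospan $I\to H\leftarrow O$ with $I,O$ discrete is an ma-cospan if $H$ is ma and the legs are mono with images $in(H)$ and $out(H)$. $H$ is strongly connected if for all $x\in in(H)$, $y\in out(H)$ there is a path from $x$ to $y$. A left-connected rule is a span $L\xleftarrow{[i_L,o_L]}K=I+O\xrightarrow{[i_R,o_R]}R$ with $I,O$ discrete, $I\to L\leftarrow O$ and $I\to R\leftarrow O$ ma-cospans, $[i_L,o_L]$ mono and $L$ strongly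 connected; a left-connected rewriting system is a finite set of such rules. A convex match is a mono $m\colon L\to G$ such that every path in $G$ between two nodes of $m(L)$ has all its hyperedges in $m(L)$. A derivation between ma-cospans $n\to G\leftarrow m$ and $n\to H\leftarrow m$ via a rule $L\leftarrow K\to R$ is given by a convex match $L\to G$, a hypergraph $C$ and a diagram $G\leftarrow C\to H$, $K\to C$, $R\to H$, $n+m\to C$ in which $K,L,C,G$ and $K,R,C,H$ are pushout squares (the left one a boundary complement, automatic for left-connected systems) and everything commutes with the interfaces; for left-connected systems mono matches are automatically convex and pushout complements exist uniquely. A pre-critical pair consists of two derivations, via rules $L_1\leftarrow K_1\to R_1$ and $L_2\leftarrow K_2\to R_2$ with pushout complements $C_1, C_2$, from a common ma-cospan $n\to S\leftarrow m$ with matches $m_1,m_2$ such that $[m_1,m_2]\colon L_1+L_2\to S$ is epi. It is parallel if there exist morphisms $g_1\colon L_1\to C_2$ and $g_2\colon L_2\to C_1$ such that $g_1$ followed by $C_2\to S$ equals $m_1$ and $g_2$ followed by $C_1\to S$ equals $m_2$. A gluing scheme for $L_1,L_2$ is a $\Sigma$-hypergraph $G$ with morphisms $g_1,g_2\colon G\to L_1+L_2$; its gluing is the coequaliser $\epsilon\colon L_1+L_2\to S=\mathtt{coeq}(g_1,g_2)$. Two nodes (or hyperedges) $x,x'$ of $L_1+L_2$ are glued if some node (hyperedge) $y$ of $G$ has $g_1(y)=x$, $g_2(y)=x'$. The gluing scheme yields a pre-critical pair if $\iota_1;\epsilon$ and $\iota_2;\epsilon$ are mono and $in(S)\xrightarrow{\subseteq}S\xleftarrow{\subseteq}out(S)$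 is an ma-cospan; the pre-critical pair is then formed by the (unique) derivations from this ma-cospan with matches $\iota_1;\epsilon$ and $\iota_2;\epsilon$. *)

(* Defs.v *)
From HB Require Import structures.
From mathcomp Require Import all_boot.
Set Implicit Arguments. Unset Strict Implicit. Unset Printing Implicit Defensive.

Record signature := Signature {
  slab : Type;
  sar : slab -> nat;
  scoar : slab -> nat }.

Section Hypergraphs.
Variable Sg : signature.

Record hyp := Hyp {
  hV : finType;
  hE : finType;
  hsrc : hE -> seq hV;
  htgt : hE -> seq hV;
  hlab : hE -> slab Sg;
  hsrc_ar : forall e, size (hsrc e) = sar (hlab e);
  htgt_ar : forall e, size (htgt e) = scoar (hlab e) }.

Record mor (G H : hyp) := Mor {
  mV : hV G -> hV H;
  mE : hE G -> hE H;
  msrc : forall e, hsrc (mE e) = map mV (hsrc e);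
  mtgt : forall e, htgt (mE e) = map mV (htgt e);
  mlab : forall e, hlab (mE e) = hlab e }.

Definition mor_eq G H (f g : mor G H) :=
  (forall v, mV f v = mV g v) /\ (forall e, mE f e = mE g e).

Definition mcomp G H K (f : mor G H) (g : mor H K) : mor G K.
Proof.
refine (@Mor G K (fun v => mV g (mV f v)) (fun e => mE g (mE f e)) _ _ _).
- by move=> e; rewrite msrc msrc -map_comp.
- by move=> e; rewrite mtgt mtgt -map_comp.
- by move=> e; rewrite !mlab.
Defined.

Definition mono G H (f : mor G H) := injective (mV f) /\ injective (mE f).

Definition coprod (G H : hyp) : hyp.
Proof.
refine (@Hyp (hV G + hV H)%type (hE G + hE H)%type
  (fun e => match e with inl e => map inl (hsrc e) | inr e => map inr (hsrc e) end)
  (fun e => match e with inl e => map inl (htgt e) | inr e => map inr (htgt e) end)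
  (fun e => match e with inl e => hlab e | inr e => hlab e end) _ _).
- by case=> e; rewrite size_map hsrc_ar.
- by case=> e; rewrite size_map htgt_ar.
Defined.

Definition iota1 G H : mor G (coprod G H).
Proof. by refine (@Mor G (coprod G H) inl inl _ _ _). Defined.

Definition iota2 G H : mor H (coprod G H).
Proof. by refine (@Mor H (coprod G H) inr inr _ _ _). Defined.

Definition is_coeq G A S (g1 g2 : mor G A) (eps : mor A S) :=
  mor_eq (mcomp g1 eps) (mcomp g2 eps) /\
  forall X (f : mor A X), mor_eq (mcomp g1 f) (mcomp g2 f) ->
    exists u : mor S X, mor_eq (mcomp eps u) f /\
      forall u' : mor S X, mor_eq (mcomp eps u') f -> mor_eq u u'.

Definition is_pushout A B C D (f : mor A B) (g : mor A C) (h : mor B D) (k : mor C D) :=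
  mor_eq (mcomp f h) (mcomp g k) /\
  forall X (h' : mor B X) (k' : mor C X), mor_eq (mcomp f h') (mcomp g k') ->
    exists u : mor D X, [/\ mor_eq (mcomp h u) h', mor_eq (mcomp k u) k' &
      forall u' : mor D X, mor_eq (mcomp h u') h' -> mor_eq (mcomp k u') k' -> mor_eq u u'].

Definition indeg (G : hyp) (v : hV G) := \sum_(e : hE G) count_mem v (htgt e).
Definition outdeg (G : hyp) (v : hV G) := \sum_(e : hE G) count_mem v (hsrc e).

Definition discrete (G : hyp) := #|hE G| = 0.

Definition estep (G : hyp) (e e' : hE G) := has (fun v => v \in hsrc e') (htgt e).
Definition is_cycle (G : hyp) (e : hE G) (s : seq (hE G)) :=
  path (@estep G) e s && has (fun v => v \in hsrc e) (htgt (last e s)).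
Definition path_from_to (G : hyp) (v v' : hV G) :=
  exists (e : hE G) (s : seq (hE G)),
    [&& path (@estep G) e s, v \in hsrc e & v' \in htgt (last e s)].

Definition is_ma (G : hyp) :=
  (forall e s, ~~ @is_cycle G e s) /\
  (forall v : hV G, indeg v <= 1 /\ outdeg v <= 1).

Definition strongly_connected (G : hyp) :=
  forall x y : hV G, indeg x = 0 -> outdeg y = 0 -> path_from_to x y.

Definition ma_cospan I O H (i : mor I H) (o : mor O H) :=
  [/\ discrete I, discrete O, is_ma H, mono i /\ mono o &
      (forall v, (exists x, mV i x = v) <-> indeg v = 0) /\
      (forall v, (exists x, mV o x = v) <-> outdeg v = 0)].

Definition disc_of (G : hyp) (P : pred (hV G)) : hyp.
Proof.
refine (@Hyp {x : hV G | P x} void (fun e => match e with end)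
  (fun e => match e with end) (fun e => match e with end) _ _); by case.
Defined.

Definition disc_incl (G : hyp) (P : pred (hV G)) : mor (disc_of P) G.
Proof. by refine (@Mor (disc_of P) G val (fun e => match e with end) _ _ _); case. Defined.

Definition in_nodes (G : hyp) : pred (hV G) := fun v => indeg v == 0.
Definition out_nodes (G : hyp) : pred (hV G) := fun v => outdeg v == 0.

Record rule := Rule {
  rI : hyp; rO : hyp; rL : hyp; rR : hyp;
  rl : mor (coprod rI rO) rL;
  rr : mor (coprod rI rO) rR }.

Definition left_connected_rule (r : rule) :=
  [/\ discrete (rI r) /\ discrete (rO r),
      ma_cospan (mcomp (@iota1 _ _) (rl r)) (mcomp (@iota2 _ _) (rl r)),
      ma_cospan (mcomp (@iota1 _ _) (rr r)) (mcomp (@iota2 _ _) (rr r)),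
      mono (rl r) & strongly_connected (rL r)].

Fixpoint rule_in (r : rule) (Rs : seq rule) : Prop :=
  match Rs with [::] => False | r' :: Rs' => r = r' \/ rule_in r Rs' end.

Definition left_connected_system (Rs : seq rule) :=
  forall r, rule_in r Rs -> left_connected_rule r.

Definition in_Linterface (r : rule) (v : hV (rL r)) := exists k, mV (rl r) k = v.

Definition glued_V G A (g1 g2 : mor G A) (x x' : hV A) :=
  exists y, mV g1 y = x /\ mV g2 y = x'.
Definition glued_E G A (g1 g2 : mor G A) (x x' : hE A) :=
  exists y, mE g1 y = x /\ mE g2 y = x'.

Definition yields_precritical L1 L2 S (eps : mor (coprod L1 L2) S) :=
  [/\ mono (mcomp (@iota1 _ _) eps), mono (mcomp (@iota2 _ _) eps) &
      ma_cospan (disc_incl (@in_nodes S)) (disc_incl (@out_nodes S))].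

Definition parallel L1 L2 C1 C2 S (m1 : mor L1 S) (m2 : mor L2 S)
    (c1 : mor C1 S) (c2 : mor C2 S) :=
  (exists h1 : mor L1 C2, mor_eq (mcomp h1 c2) m1) /\
  (exists h2 : mor L2 C1, mor_eq (mcomp h2 c1) m2).

End Hypergraphs.

(* Main.v *)
Require Import Defs.
From HB Require Import structures.
From mathcomp Require Import all_boot.
Set Implicit Arguments. Unset Strict Implicit. Unset Printing Implicit Defensive.

Lemma inv_connect (T : finType) (Y : Type) (R : rel T) (F : T -> Y) :
  (forall x y, R x y -> F x = F y) -> forall x y, connect R x y -> F x = F y.
Proof.
move=> HF x y /connectP [p Hp ->]; elim: p x Hp => [//|z p IH] x /= /andP [Rxz Hp].
by rewrite (HF _ _ Rxz); apply: IH.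
Qed.

Lemma cross (T1 T2 : finType) (Y : eqType) (R : rel (T1 + T2)%type) (f : T1 + T2 -> Y) :
  (forall x y, R x y -> f x = f y) -> injective (fun a => f (inl a)) ->
  injective (fun b => f (inr b)) ->
  forall a b, connect R (inl a) (inr b) -> R (inl a) (inr b) || R (inr b) (inl a).
Proof.
move=> Rf i1 i2 a b Hc.
have fab : f (inl a) = f (inr b) := inv_connect Rf Hc.
apply/negPn/negP => /norP [N1 N2].
have Hcl : closed R (pred1 (inl a)).
  move=> x y Rxy; have fxy := Rf _ _ Rxy; rewrite !inE.
  case: (eqVneq x (inl a)) => [Ex|Nx].
    subst x; case: y Rxy fxy => [c|c] Rxy fxy.
      by rewrite (i1 _ _ (esym fxy)) eqxx.
    have cb : c = b by apply: i2; rewrite -fxy.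
    by subst c; rewrite Rxy in N1.
  case: (eqVneq y (inl a)) => [Ey|]; last by [].
  subst y; case: x Rxy fxy Nx => [c|c] Rxy fxy Nx.
    by rewrite (i1 _ _ fxy) eqxx in Nx.
  have cb : c = b by apply: i2; rewrite fxy.
  by subst c; rewrite Rxy in N2.
have := closed_connect Hcl Hc; by rewrite !inE eqxx.
Qed.

Section Quot.
Variable Sg : signature.
Variables (G A : hyp Sg) (g1 g2 : mor G A).

Definition BV (x y : hV A) := [exists z, (mV g1 z == x) && (mV g2 z == y)].
Definition RV : rel (hV A) := fun x y => BV x y || BV y x.
Definition BE (x y : hE A) := [exists z, (mE g1 z == x) && (mE g2 z == y)].
Definition RE : rel (hE A) := fun x y => BE x y || BE y x.

Lemma RV_sym : symmetric RV. Proof. by move=> x y; rewrite /RV orbC. Qed.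
Lemma RE_sym : symmetric RE. Proof. by move=> x y; rewrite /RE orbC. Qed.

Lemma rootV_g z : root RV (mV g1 z) = root RV (mV g2 z).
Proof.
apply/(rootP (sym_connect_sym RV_sym)); apply: connect1.
by rewrite /RV /BV; apply/orP; left; apply/existsP; exists z; rewrite !eqxx.
Qed.

Lemma rootE_g z : root RE (mE g1 z) = root RE (mE g2 z).
Proof.
apply/(rootP (sym_connect_sym RE_sym)); apply: connect1.
by rewrite /RE /BE; apply/orP; left; apply/existsP; exists z; rewrite !eqxx.
Qed.

Lemma RE_step (F : hE A -> seq (hV A)) :
  (forall z, F (mE g1 z) = F (mE g2 z)) -> forall x y, RE x y -> F x = F y.
Proof.
move=> HF x y; rewrite /RE /BE => /orP [] /existsP [z /andP [/eqP <- /eqP <-]] //.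
Qed.

Lemma RE_root (Y : Type) (F : hE A -> Y) :
  (forall z, F (mE g1 z) = F (mE g2 z)) -> forall e, F (root RE e) = F e.
Proof.
move=> HF e; symmetry; apply: (inv_connect _ (connect_root _ e)).
move=> x y; rewrite /RE /BE => /orP [] /existsP [z /andP [/eqP <- /eqP <-]] //.
Qed.

Definition Qh : hyp Sg.
refine (@Hyp Sg (hV A) (hE A) (fun e => map (root RV) (hsrc e))
  (fun e => map (root RV) (htgt e)) (@hlab Sg A) _ _).
- by move=> e; rewrite size_map hsrc_ar.
- by move=> e; rewrite size_map htgt_ar.
Defined.

Definition qm : mor A Qh.
refine (@Mor Sg A Qh (root RV) (root RE) _ _ _).
- move=> e /=; apply: (@RE_root _ (fun e => map (root RV) (hsrc e))) => z.
  by rewrite !msrc -!map_comp; apply: eq_map => w /=; rewrite rootV_g.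
- move=> e /=; apply: (@RE_root _ (fun e => map (root RV) (htgt e))) => z.
  by rewrite !mtgt -!map_comp; apply: eq_map => w /=; rewrite rootV_g.
- move=> e /=; apply: (@RE_root _ (fun e => hlab e)) => z.
  by rewrite !mlab.
Defined.

Lemma coeq_connect (S : hyp Sg) (eps : mor A S) : is_coeq g1 g2 eps ->
  (forall x y, mV eps x = mV eps y -> connect RV x y) /\
  (forall x y, mE eps x = mE eps y -> connect RE x y).
Proof.
case=> _ /(_ Qh qm) [].
  by split=> z /=; [apply: rootV_g | apply: rootE_g].
move=> u [[Hu1 Hu2] _]; split=> x y Hxy.
  apply/(rootP (sym_connect_sym RV_sym)).
  by have := Hu1 x; have := Hu1 y; rewrite /= Hxy => -> ->.
apply/(rootP (sym_connect_sym RE_sym)).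
by have := Hu2 x; have := Hu2 y; rewrite /= Hxy => -> ->.
Qed.
End Quot.

Section PO.
Variable Sg : signature.
Variables (K L C D : hyp Sg) (f : mor K L) (g : mor K C) (h : mor L D) (k : mor C D).
Hypothesis Hpo : is_pushout f g h k.
Hypothesis finj : injective (mV f).
Hypothesis Kne : hE K -> False.

Definition hpV (v : hV L) : (hV C + hV L)%type :=
  match [pick a | mV f a == v] with Some a => inl (mV g a) | None => inr v end.

Definition Xh : hyp Sg.
refine (@Hyp Sg (hV C + hV L)%type (hE C + hE L)%type
  (fun e => match e with inl c => map inl (hsrc c) | inr e => map hpV (hsrc e) end)
  (fun e => match e with inl c => map inl (htgt c) | inr e => map hpV (htgt e) end)
  (fun e => match e with inl c => hlab c | inr e => hlab e end) _ _).
- by case=> e; rewrite size_map hsrc_ar.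
- by case=> e; rewrite size_map htgt_ar.
Defined.

Definition hm : mor L Xh.
by refine (@Mor Sg L Xh hpV inr _ _ _). Defined.
Definition km : mor C Xh.
by refine (@Mor Sg C Xh inl inl _ _ _). Defined.

Definition wV (x : hV Xh) : hV D := match x with inl c => mV k c | inr v => mV h v end.
Definition wE (x : hE Xh) : hE D := match x with inl c => mE k c | inr v => mE h v end.

Lemma wV_hp v : wV (hpV v) = mV h v.
Proof.
rewrite /hpV; case: pickP => [a /eqP <-|] //=.
by have := (Hpo.1).1 a => /= ->.
Qed.

Definition wm : mor Xh D.
refine (@Mor Sg Xh D wV wE _ _ _).
- case=> e /=; rewrite ?msrc -map_comp //.
  by apply: eq_map => v /=; rewrite wV_hp.
- case=> e /=; rewrite ?mtgt -map_comp //.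
  by apply: eq_map => v /=; rewrite wV_hp.
- by case=> e /=; rewrite mlab.
Defined.

Definition idm (H : hyp Sg) : mor H H.
refine (@Mor Sg H H id id _ _ _) => e; by rewrite ?map_id.
Defined.

Lemma agree : mor_eq (mcomp f hm) (mcomp g km).
Proof.
split=> a /=; last by case: (Kne a).
rewrite /hpV; case: pickP => [a' /eqP /finj -> //|/(_ a)]; by rewrite eqxx.
Qed.

Lemma po_facts :
  [/\ injective (mV k),
      (forall v c, mV h v = mV k c -> exists a, mV f a = v),
      (forall e c, mE h e <> mE k c),
      (forall s, (exists v, mV h v = s) \/ (exists c, mV k c = s)) &
      (forall s, (exists v, mE h v = s) \/ (exists c, mE k c = s))].
Proof.
have [u [[Hu1 Hu2] [Hu3 Hu4] _]] := Hpo.2 _ _ _ agree.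
have [u0 [_ _ U0]] := Hpo.2 _ _ _ Hpo.1.
have Hid : mor_eq (mcomp u wm) (idm D).
  have A1 := U0 (idm D) (conj (fun _ => erefl) (fun _ => erefl))
                         (conj (fun _ => erefl) (fun _ => erefl)).
  have A2 : mor_eq u0 (mcomp u wm).
    apply: U0; split=> x /=.
    - by have := Hu1 x => /= ->; rewrite wV_hp.
    - by have := Hu2 x => /= ->.
    - by have := Hu3 x => /= ->.
    - by have := Hu4 x => /= ->.
  by split=> x; rewrite -A1.1 -A2.1 || rewrite -A1.2 -A2.2.
split.
- move=> x y E; have := Hu3 x; have := Hu3 y; rewrite /= E => -> [] //.
- move=> v c E; have := Hu1 v; have := Hu3 c; rewrite /= E => -> /esym; rewrite /hpV.
  by case: pickP => [a /eqP <- _|_ //]; exists a.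
- move=> e c E; have := Hu2 e; have := Hu4 c; by rewrite /= E => ->.
- move=> s; have := Hid.1 s => /=; case: (mV u s) => x <-; [right|left]; by exists x.
- move=> s; have := Hid.2 s => /=; case: (mE u s) => x <-; [right|left]; by exists x.
Qed.
End PO.

Lemma factor (Sg : signature) (L C S : hyp Sg) (m : mor L S) (c : mor C S) :
  injective (mV c) -> (forall v, exists x, mV c x = mV m v) ->
  (forall e, exists x, mE c x = mE m e) -> exists h : mor L C, mor_eq (mcomp h c) m.
Proof.
move=> ci HV HE.
have HV' v : exists x, mV c x == mV m v by have [x <-] := HV v; exists x.
have HE' e : exists x, mE c x == mE m e by have [x <-] := HE e; exists x.
pose hv v := xchoose (HV' v); pose he e := xchoose (HE' e).
have Hv v : mV c (hv v) = mV m v by apply/eqP; exact: (xchooseP (HV' v)).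
have He e : mE c (he e) = mE m e by apply/eqP; exact: (xchooseP (HE' e)).
unshelve eexists (@Mor Sg L C hv he _ _ _).
- move=> e; apply: (inj_map ci); rewrite -msrc He msrc -map_comp.
  by apply: eq_map => v /=; rewrite Hv.
- move=> e; apply: (inj_map ci); rewrite -mtgt He mtgt -map_comp.
  by apply: eq_map => v /=; rewrite Hv.
- by move=> e; rewrite -(mlab c) He mlab.
by split=> x /=; [apply: Hv | apply: He].
Qed.

Lemma disc_empty (Sg : signature) (H : hyp Sg) : discrete H -> hE H -> False.
Proof. by move=> dH e; move/card0_eq: dH => /(_ e); rewrite !inE. Qed.

Lemma K_empty (Sg : signature) (r : rule Sg) : left_connected_rule r -> hE (coprod (rI r) (rO r)) -> False.
Proof. by case=> -[dI dO] _ _ _ _ [] e; [apply: (disc_empty dI) | apply: (disc_empty dO)]. Qed.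
Unset Implicit Arguments.
Theorem mainTheorem4 (Sg : signature) (Rs : seq (rule Sg))
  (HRs : left_connected_system Rs)
  (r1 r2 : rule Sg) (Hr1 : rule_in r1 Rs) (Hr2 : rule_in r2 Rs)
  (G : hyp Sg) (g1 g2 : mor G (coprod (rL r1) (rL r2)))
  (S : hyp Sg) (eps : mor (coprod (rL r1) (rL r2)) S)
  (Hcoeq : is_coeq g1 g2 eps)
  (Hpre : yields_precritical eps)
  (C1 : hyp Sg) (k1 : mor (coprod (rI r1) (rO r1)) C1) (c1 : mor C1 S)
  (HC1 : is_pushout (rl r1) k1 (mcomp (@iota1 Sg (rL r1) (rL r2)) eps) c1)
  (C2 : hyp Sg) (k2 : mor (coprod (rI r2) (rO r2)) C2) (c2 : mor C2 S)
  (HC2 : is_pushout (rl r2) k2 (mcomp (@iota2 Sg (rL r1) (rL r2)) eps) c2) :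
  parallel (mcomp (@iota1 Sg (rL r1) (rL r2)) eps) (mcomp (@iota2 Sg (rL r1) (rL r2)) eps) c1 c2 <->
  ((forall (e1 : hE (rL r1)) (e2 : hE (rL r2)),
       ~ glued_E g1 g2 (inl e1) (inr e2) /\ ~ glued_E g1 g2 (inr e2) (inl e1)) /\
   (forall (v1 : hV (rL r1)) (v2 : hV (rL r2)),
       (glued_V g1 g2 (inl v1) (inr v2) \/ glued_V g1 g2 (inr v2) (inl v1)) ->
       in_Linterface v1 /\ in_Linterface v2)).
Proof.
have R1 := HRs _ Hr1; have R2 := HRs _ Hr2.
have KE1 := K_empty R1; have KE2 := K_empty R2.
have [_ _ _ mono1 _] := R1; have [_ _ _ mono2 _] := R2.
have [ci1 b1 d1 sV1 sE1] := po_facts HC1 mono1.1 KE1.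
have [ci2 b2 d2 sV2 sE2] := po_facts HC2 mono2.1 KE2.
case: Hpre => [[i1V i1E] [i2V i2E] _].
have [cV cE] := coeq_connect Hcoeq.
have [[eqV eqE] _] := Hcoeq.
have glV : forall v1 v2, mV eps (inl v1) = mV eps (inr v2) <->
   glued_V g1 g2 (inl v1) (inr v2) \/ glued_V g1 g2 (inr v2) (inl v1).
  have RfV : forall x y, RV g1 g2 x y -> mV eps x = mV eps y.
    move=> x y; rewrite /RV /BV => /orP [] /existsP [z /andP [/eqP <- /eqP <-]].
      exact: eqV.
    exact: (esym (eqV z)).
  move=> v1 v2; split => [E|].
    have := @cross _ _ _ (RV g1 g2) (mV eps) RfV i1V i2V _ _ (cV _ _ E).
    have BV_gl x y : BV g1 g2 x y -> glued_V g1 g2 x y.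
      by move/existsP=> [z /andP [/eqP <- /eqP <-]]; exists z.
    rewrite /RV => /orP [/orP [] H | /orP [] H]; move/BV_gl: H; tauto.
  by case=> -[y [<- <-]]; [exact: (eqV y) | exact: (esym (eqV y))].
have glE : forall e1 e2, mE eps (inl e1) = mE eps (inr e2) ->
   glued_E g1 g2 (inl e1) (inr e2) \/ glued_E g1 g2 (inr e2) (inl e1).
  have RfE : forall x y, RE g1 g2 x y -> mE eps x = mE eps y.
    move=> x y; rewrite /RE /BE => /orP [] /existsP [z /andP [/eqP <- /eqP <-]].
      exact: eqE.
    exact: (esym (eqE z)).
  move=> e1 e2 E.
  have := @cross _ _ _ (RE g1 g2) (mE eps) RfE i1E i2E _ _ (cE _ _ E).
  have BE_gl x y : BE g1 g2 x y -> glued_E g1 g2 x y.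
    by move/existsP=> [z /andP [/eqP <- /eqP <-]]; exists z.
  rewrite /RE => /orP [/orP [] H | /orP [] H]; move/BE_gl: H; tauto.
have glE' : forall e1 e2, glued_E g1 g2 (inl e1) (inr e2) \/ glued_E g1 g2 (inr e2) (inl e1) ->
   mE eps (inl e1) = mE eps (inr e2).
  by move=> e1 e2 [] [y [<- <-]]; [exact: (eqE y) | exact: (esym (eqE y))].
split.
- move=> [[h1 [Hh1V Hh1E]] [h2 [Hh2V Hh2E]]]; split.
    move=> e1 e2; split=> G0.
      have E := glE' e1 e2 (or_introl G0); have := Hh1E e1 => /= H.
      by apply: (d2 e2 (mE h1 e1)); rewrite /= H; exact: (esym E).
    have E := glE' e1 e2 (or_intror G0); have := Hh1E e1 => /= H.
    by apply: (d2 e2 (mE h1 e1)); rewrite /= H; exact: (esym E).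
  move=> v1 v2 /glV E; split.
    apply: (b1 v1 (mV h2 v2)); rewrite /= E.
    by have := Hh2V v2 => /= ->.
  apply: (b2 v2 (mV h1 v1)); rewrite /= -E.
  by have := Hh1V v1 => /= ->.
- move=> [H1 H2]; split.
    apply: factor => //.
      move=> v; case: (sV2 (mV eps (inl v))) => -[x Ex]; last by exists x.
      have [_ [a Ea]] := H2 _ _ (proj1 (glV _ _) (esym Ex)).
      by exists (mV k2 a); rewrite /= -Ex -Ea; have := (HC2.1).1 a => /= ->.
    move=> e; case: (sE2 (mE eps (inl e))) => -[x Ex]; last by exists x.
    by have [] := H1 e x; case: (glE _ _ (esym Ex)).
  apply: factor => //.
    move=> v; case: (sV1 (mV eps (inr v))) => -[x Ex]; last by exists x.
    have [[a Ea] _] := H2 _ _ (proj1 (glV _ _) Ex).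
    by exists (mV k1 a); rewrite /= -Ex -Ea; have := (HC1.1).1 a => /= ->.
  move=> e; case: (sE1 (mE eps (inr e))) => -[x Ex]; last by exists x.
  by have [] := H1 x e; case: (glE _ _ Ex).
Qed.
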